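(* Let $T$ be a tree on $S$ and let $\{u,v\}$ be an edge of $T$ with at most one of $u,v$ labelled. If $\mathrm{md}(u,v)>0$, then the tree $T/\{u,v\}$ obtained by contracting this edge satisfies $\mathrm{MP}(T/\{u,v\})>\mathrm{MP}(T)$. Equivalently, if contracting $\{u,v\}$ does not increase the MP-cost, then $\mathrm{md}(u,v)=0$.
   Context: Fix integers $n\ge 2$ and $m\ge 1$, and finite nonempty sets $\Sigma_1,\dots,\Sigma_m$ (the states of characters $1,\dots,m$). A set of species $S=\{S_1,\dots,S_n\}$ is given, each species $S_j$ being an $m$-tuple $(s_{j,1},\dots,s_{j,m})\in\Sigma_1\times\cdots\times\Sigma_m$. A tree on $S$ is a finite unrooted tree (connected acyclic undirected graph) $T$ together with an injective map assigning each species $S_j$ to a node of $T$. Nodes receiving a species are called labelled, the others unlabelled. A fit of $T$ is a map $f$ assigning to every node $v$ a tuple $f(v)=(f(v)_1,\dots,f(v)_m)\in\Sigma_1\times\cdots\times\Sigma_m$ such that $f(v)=S_j$ whenever $v$ is labelled with $S_j$. The cost of $f$ is $\sum_{\{u,v\}\in E(T)} h(f(u),f(v))$, where $h$ is the Hamming distance. The MP-cost $\mathrm{MP}(T)$ is the minimum cost over all fits of $T$. A best fit is a fit of cost $\mathrm{MP}(T)$. Root sets: for a node $v$ and character $i$, $VV(v)_i=\{f(v)_i : f \text{ a best fit of } T\}\subseteq\Sigma_i$ (for a labelled node this is the singleton containing its species' $i$-th state). For adjacent nodes $u,v$, the min-cost is $\mathrm{md}(u,v)=|\{i\in\{1,\dots,m\}: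 VV(u)_i\cap VV(v)_i=\emptyset\}|$. Edge contraction: for an edge $\{u,v\}$ of $T$ with at most one of $u,v$ labelled, $T/\{u,v\}$ is obtained by replacing $u$ and $v$ by a single new node $w$ adjacent to every node that was adjacent to $u$ or to $v$ (other than $u,v$ themselves); $w$ carries the species of $u$ or $v$ if one of them is labelled, and is unlabelled otherwise. All other nodes, edges and labels are unchanged. *)

(* Defs.v *)
From mathcomp Require Import all_boot.
Set Implicit Arguments. Unset Strict Implicit. Unset Printing Implicit Defensive.

Section Parsimony.

Variables (n m : nat) (Sig : 'I_m -> finType).

Definition state := {dffun forall i : 'I_m, Sig i}.

Definition ham (x y : state) : nat := #|[pred i : 'I_m | x i != y i]|.

Variable S : 'I_n -> state.

Section Tree.
Variables (V : finType) (e : rel V) (lab : 'I_n -> V).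

Definition is_tree : Prop :=
  [/\ symmetric e, irreflexive e,
      (forall x y, connect e x y) &
      (forall (x : V) (p : seq V), path e x p -> uniq (x :: p) ->
          2 <= size p -> ~~ e (last x p) x)].

Definition fitT := {ffun V -> state}.

Definition is_fit (f : fitT) : bool := [forall j, f (lab j) == S j].

(* cost: sum over (unordered) edges, each edge counted once *)
Definition cost (f : fitT) : nat :=
  \sum_(x : V) \sum_(y : V | e x y && (enum_rank x < enum_rank y)) ham (f x) (f y).

Definition fit_cost_pred : pred nat :=
  fun c => [exists f : fitT, is_fit f && (cost f == c)].

Lemma fit_cost_ex : [exists f : fitT, is_fit f] -> exists c, fit_cost_pred c.
Proof.
case/existsP=> f hf; exists (cost f); apply/existsP; exists f.
by rewrite hf eqxx.
Qed.

(* MP-cost: the minimum cost over all fits (0 if there is no fit at all,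
   which cannot happen when the Sigma_i are nonempty). *)
Definition MP : nat :=
  match boolP [exists f : fitT, is_fit f] with
  | AltTrue h => ex_minn (fit_cost_ex h)
  | AltFalse _ => 0
  end.

Definition best_fit (f : fitT) : bool :=
  is_fit f && (cost f == MP).

Definition VV (x : V) (i : 'I_m) : {set Sig i} :=
  [set s | [exists f : fitT, best_fit f && (f x i == s)]].

Definition md (x y : V) : nat :=
  #|[set i : 'I_m | [disjoint VV x i & VV y i]]|.

(* Contraction of the edge {u,v}: new node type is
   option {x | x != u & x != v}, where None is the new node w. *)
Variables (u v : V).

Definition cnode := option {x : V | (x != u) && (x != v)}.

Definition cmap (x : V) : cnode := insub x.

Definition contr_rel : rel cnode :=
  fun a b => (a != b) &&
    [exists x : V, exists y : V, [&& e x y, cmap x == a & cmap y == b]].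

Definition contr_lab : 'I_n -> cnode := fun j => cmap (lab j).

End Tree.
End Parsimony.
Arguments contr_rel {V} e u v.
Arguments contr_lab {n V} lab u v.
Arguments cmap {V} u v x.

(* Main.v *)
Require Import Defs.
From mathcomp Require Import all_boot.
Set Implicit Arguments. Unset Strict Implicit. Unset Printing Implicit Defensive.

Section A.
Variables (n m : nat) (Sig : 'I_m -> finType) (S : 'I_n -> state Sig).
Variables (V : finType) (e : rel V) (lab : 'I_n -> V).

Lemma alt_gen (P : Prop) (b b' : bool) (a : alt_spec P b b') (F : P -> nat)
  (Q : nat -> Prop) : (forall h, Q (F h)) -> (~~ b -> Q 0) ->
  Q (match a with AltTrue h => F h | AltFalse _ => 0 end).
Proof. by case: a => [p|p] H1 H2; [apply: H1|apply: H2]. Qed.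

Lemma MP_le (f : fitT Sig V) : is_fit S lab f -> MP S e lab <= cost e f.
Proof.
move=> hf; rewrite /MP.
apply: (@alt_gen _ _ _ _ _ (fun x => x <= cost e f)) => [h|]; last by [].
case: ex_minnP => c _; apply; apply/existsP; exists f; by rewrite hf eqxx.
Qed.

Lemma MP_best : (exists f : fitT Sig V, is_fit S lab f) ->
  exists f : fitT Sig V, is_fit S lab f /\ cost e f = MP S e lab.
Proof.
move=> [f0 hf0]; rewrite /MP.
apply: (@alt_gen _ _ _ _ _ (fun x => exists f : fitT Sig V, is_fit S lab f /\ cost e f = x)) => [h|h].
  case: ex_minnP => c /existsP [f /andP [hf /eqP hc]] _; by exists f.
by exfalso; move/negP: h; apply; apply/existsP; exists f0.
Qed.

Lemma ham_sym (x y : state Sig) : ham x y = ham y x.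
Proof. by apply: eq_card => i; rewrite !inE eq_sym. Qed.

Lemma ham_xx (x : state Sig) : ham x x = 0.
Proof. by apply: eq_card0 => i; rewrite !inE eqxx. Qed.

Lemma sub_sum (I : finType) (P Q : pred I) (F : I -> nat) :
  (forall i, P i -> Q i) -> \sum_(i | P i) F i <= \sum_(i | Q i) F i.
Proof.
move=> PQ; rewrite [X in _ <= X](bigID P) /=.
rewrite (eq_bigl P) ?leq_addr // => i; case: (boolP (P i)) => Pi; rewrite ?andbT ?andbF //.
by rewrite PQ.
Qed.

Definition sum2 (W : finType) (r : rel W) (f : fitT Sig W) :=
  \sum_(p : W * W | r p.1 p.2) ham (f p.1) (f p.2).

Lemma cost_double (W : finType) (r : rel W) (f : fitT Sig W) :
  symmetric r -> irreflexive r -> (cost r f).*2 = sum2 r f.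
Proof.
move=> rs ri; rewrite /cost /sum2 pair_big_dep /=.
rewrite -addnn [in RHS](bigID (fun p : W * W => enum_rank p.1 < enum_rank p.2)) /=.
congr (_ + _).
rewrite (reindex_inj (h := fun p : W * W => (p.2, p.1))) /=; last by move=> [? ?] [? ?] [-> ->].
apply: eq_big => [[x y]|[x y] _] /=; last by rewrite ham_sym.
rewrite (rs y x) -leqNgt; case: (boolP (r x y)) => //= hr.
have hxy : x != y by apply: contraTneq hr => ->; rewrite ri.
by rewrite ltn_neqAle (inj_eq val_inj) (inj_eq enum_rank_inj) eq_sym hxy.
Qed.
End A.

Section C.
Variables (m : nat) (Sig : 'I_m -> finType).
Variables (V : finType) (e : rel V) (u v : V).
Hypothesis tr : is_tree e.
Hypothesis euv : e u v.

Definition inuv x := (x == u) || (x == v).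

Lemma cmapN x : (cmap u v x == None) = inuv x.
Proof.
rewrite /cmap /inuv; case: insubP => [s hs _|hs] /=.
  by move: hs; case: eqP => //= _; case: eqP.
by move: hs; rewrite negb_and !negbK.
Qed.

Lemma cmap_eq x y : cmap u v x = cmap u v y -> x = y \/ (inuv x && inuv y).
Proof.
rewrite /cmap; case: insubP => [sx hx ex|hx]; case: insubP => [sy hy ey|hy] //=.
- by move=> [] h; left; rewrite -ex -ey h.
by move=> _; right; move: hx hy; rewrite /inuv !negb_and !negbK => -> ->.
Qed.

Lemma tri z : ~~ inuv z -> e z u -> e z v -> False.
Proof.
case: tr => es ei _ acyc.
rewrite /inuv negb_or => /andP [zu zv] hzu hzv.
have := acyc u [:: v; z]; rewrite /= euv (es v z) hzv !inE /= => /(_ isT).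
have uv : u != v by apply: contraTneq euv => ->; rewrite ei.
by rewrite negb_or uv eq_sym zu eq_sym zv hzu => /(_ isT isT).
Qed.

Lemma tri2 a b z : inuv a -> inuv b -> a != b -> ~~ inuv z -> e z a -> e z b -> False.
Proof.
rewrite /inuv => /orP [] /eqP -> /orP [] /eqP -> //; rewrite ?eqxx //.
- by move=> _ hz h1 h2; apply: (tri hz h1 h2).
- by move=> _ hz h1 h2; apply: (tri hz h2 h1).
Qed.

Lemma crel_sym : symmetric (contr_rel e u v).
Proof.
case: tr => es _ _ _.
move=> a b; rewrite /contr_rel eq_sym; congr (_ && _).
apply/existsP/existsP => [] [x /existsP [y /and3P [h1 h2 h3]]];
  exists y; apply/existsP; exists x; by rewrite es h1 h2 h3.
Qed.

Lemma crel_irr : irreflexive (contr_rel e u v).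
Proof. by move=> a; rewrite /contr_rel eqxx. Qed.

Lemma sum2_contr (g : fitT Sig (cnode u v)) :
  sum2 e [ffun x => g (cmap u v x)] <= sum2 (contr_rel e u v) g.
Proof.
case: tr => es ei _ _.
rewrite /sum2 (bigID (fun p : V * V => cmap u v p.1 == cmap u v p.2)) /=.
rewrite big1 ?add0n; last by move=> p /andP [_ /eqP]; rewrite !ffunE => ->; rewrite ham_xx.
set A := [pred p : V * V | e p.1 p.2 && (cmap u v p.1 != cmap u v p.2)].
set phi := fun p : V * V => (cmap u v p.1, cmap u v p.2).
have -> : \sum_(i | e i.1 i.2 && (cmap u v i.1 != cmap u v i.2))
    ham ([ffun x => g (cmap u v x)] i.1) ([ffun x => g (cmap u v x)] i.2)
  = \sum_(i in A) (fun q => ham (g q.1) (g q.2)) (phi i).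
  by apply: eq_big => // p _; rewrite !ffunE.
have inj : {in A &, injective phi}.
  move=> [x y] [x' y'] /andP [/= hxy nxy] /andP [/= hxy' nxy'] [] /cmap_eq hx /cmap_eq hy.
  case: hx => [ex|/andP [ix ix']]; case: hy => [ey|/andP [iy iy']].
  - by rewrite ex ey.
  - subst x'; case: (eqVneq y y') => [->//|nyy]; exfalso.
    have ixn : ~~ inuv x by rewrite -cmapN; move: nxy; apply: contra => /eqP ->; rewrite eq_sym cmapN.
    by apply: (tri2 iy iy' nyy ixn hxy hxy').
  - subst y'; case: (eqVneq x x') => [->//|nxx]; exfalso.
    have iyn : ~~ inuv y by rewrite -cmapN; move: nxy; apply: contra => /eqP ->; rewrite cmapN.
    by apply: (tri2 ix ix' nxx iyn); rewrite es.
  - have hx0 : cmap u v x == None by rewrite cmapN.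
    have hy0 : cmap u v y == None by rewrite cmapN.
    by rewrite (eqP hx0) (eqP hy0) eqxx in nxy.
apply: (@leq_trans (\sum_(q in phi @: A) ham (g q.1) (g q.2))).
  by rewrite (big_imset (fun q => ham (g q.1) (g q.2)) inj).
apply: sub_sum => q /imsetP [[x y] /andP [/= hxy nxy] ->].
rewrite /contr_rel /phi /= nxy /=; apply/existsP; exists x; apply/existsP; exists y.
by rewrite hxy !eqxx.
Qed.
End C.

Theorem lemma6 (n m : nat) (Sig : 'I_m -> finType) (S : 'I_n -> state Sig)
  (V : finType) (e : rel V) (lab : 'I_n -> V) (u v : V) :
  2 <= n -> 1 <= m -> (forall i : 'I_m, 0 < #|Sig i|) -> injective S ->
  is_tree e -> injective lab ->
  e u v -> ~~ ((u \in codom lab) && (v \in codom lab)) ->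
  0 < md S e lab u v ->
  MP S e lab < MP S (contr_rel e u v) (contr_lab lab u v).
Proof.
move=> _ _ hSig _ tr labi euv hlab hmd.
have tr' := tr; case: tr' => es ei _ _.
pose d : state Sig := finfun (fun i => xchoose (elimT card_gt0P (hSig i))).
have clab_inj : injective (contr_lab lab u v).
  move=> j j' /cmap_eq [/labi //|/andP [ij ij']].
  case: (eqVneq (lab j) (lab j')) => [/labi //|nj]; exfalso.
  move/negP: hlab; apply.
  move: ij ij' nj; rewrite /inuv => /orP [] /eqP hj /orP [] /eqP hj';
    rewrite hj hj' ?eqxx // => _.
  - by rewrite -hj -hj' !codom_f.
  - by rewrite -hj -hj' !codom_f.
pose g0 : fitT Sig (cnode u v) :=
  [ffun a => if [pick j | contr_lab lab u v j == a] is Some j then S j else d].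
have hg0 : is_fit S (contr_lab lab u v) g0.
  apply/forallP => j; rewrite /g0 ffunE; case: pickP => [j' /eqP /clab_inj -> //|H].
  by move: (H j); rewrite eqxx.
have [g [hg hcg]] := MP_best (contr_rel e u v) (ex_intro _ g0 hg0).
pose f : fitT Sig V := [ffun x => g (cmap u v x)].
have hf : is_fit S lab f.
  by apply/forallP => j; rewrite /f ffunE; exact: (forallP hg j).
have hle : cost e f <= cost (contr_rel e u v) g.
  rewrite -leq_double !cost_double //; first exact: sum2_contr.
  - exact: crel_sym.
  - exact: crel_irr.
have hMP := MP_le e hf.
have hle2 : MP S e lab <= MP S (contr_rel e u v) (contr_lab lab u v) by rewrite -hcg (leq_trans hMP hle).
rewrite ltn_neqAle hle2 andbT.
apply/eqP => heq.
have bf : best_fit S e lab f.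
  by rewrite /best_fit hf /= eqn_leq hMP heq -hcg hle.
have fuv : f u = f v.
  rewrite /f !ffunE; congr (g _).
  have hu0 : cmap u v u == None by rewrite cmapN /inuv eqxx.
  have hv0 : cmap u v v == None by rewrite cmapN /inuv eqxx orbT.
  by rewrite (eqP hu0) (eqP hv0).
move: hmd; rewrite /md; case/card_gt0P => i; rewrite inE => /disjointFr hd.
have hu : f u i \in VV S e lab u i by rewrite inE; apply/existsP; exists f; rewrite bf eqxx.
have hv : f u i \in VV S e lab v i by rewrite fuv inE; apply/existsP; exists f; rewrite bf eqxx.
by rewrite (hd _ hu) in hv.
Qed.
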